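(* Let $N$ be a coupled $s$-square network with at least two reactions, none of which is an inflow or outflow reaction, in which every species has total molecularity at most two, and suppose $\operatorname{Or}(N)\ne0$. Then every reaction of $N$ has the form $A+B\to0$ or $A\to B$ for two distinct species $A,B$ of $N$.
   Context: A square ($s$-square) network is a list of $s$ reactions $y_k\to y'_k$ ($y_k,y'_k\in\mathbb{Z}^s_{\ge0}$, $y_k\ne y'_k$) on $s$ species, each species occurring in some complex. Inflow/outflow reactions are $0\to X_i$ and $X_i\to 0$. A network is coupled if its reactions cannot be split into two nonempty sets involving disjoint sets of species. Total molecularity: list the non-flow reactions as non-reversible ones $y_j\to y_j'$ plus each reversible pair $y_j\rightleftarrows y_j'$ once; $\operatorname{TM}(X_i)=\sum_j(y_{ji}+y'_{ji})$. Orientation: $\operatorname{Or}(N)=\operatorname{sign}(\det M\det R)$ where $M$ has rows $y_k$ and $R$ has rows $y_k-y'_k$. *)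

(* Defs.v *)
From HB Require Import structures.
From mathcomp Require Import all_boot all_order all_algebra.
Set Implicit Arguments. Unset Strict Implicit. Unset Printing Implicit Defensive.
Import Order.TTheory GRing.Theory Num.Theory.

(* An s-square network: s reactions k : 'I_s on s species i : 'I_s;
   reaction k is  y k -> yp k,  with (y k i) the stoichiometric coefficient
   of species i in the source complex and (yp k i) in the product complex. *)

Section Network.
Variables (s : nat) (y yp : 'I_s -> 'I_s -> nat).

Definition involved (k i : 'I_s) : bool := (0 < y k i) || (0 < yp k i).

Definition square_network : Prop :=
  (forall k : 'I_s, exists j, y k j <> yp k j) /\
  (forall i : 'I_s, exists k, involved k i).

Definition is_inflow (k : 'I_s) : bool :=
  [forall j, y k j == 0] && [exists i, [forall j, yp k j == (j == i) :> nat]].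
Definition is_outflow (k : 'I_s) : bool :=
  [forall j, yp k j == 0] && [exists i, [forall j, y k j == (j == i) :> nat]].
Definition is_flow (k : 'I_s) : bool := is_inflow k || is_outflow k.

Definition is_rev_of (l k : 'I_s) : bool :=
  [forall j, (y l j == yp k j) && (yp l j == y k j)].

Definition coupled : Prop :=
  forall P : {set 'I_s}, P != set0 -> P != setT ->
    exists k l i, [/\ k \in P, l \notin P, involved k i & involved l i].

(* total molecularity: sum over non-flow reactions, a reversible pair being
   counted once (the later member of a reversible pair is skipped) *)
Definition TM (i : 'I_s) : nat :=
  \sum_(k < s | ~~ is_flow k && ~~ [exists l : 'I_s, (l < k) && is_rev_of l k])
     (y k i + yp k i).

Definition Mmx : 'M[int]_s := \matrix_(k, i) ((y k i)%:Z)%R.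
Definition Rmx : 'M[int]_s := \matrix_(k, i) ((y k i)%:Z - (yp k i)%:Z)%R.

Definition Or : int := Num.sg (\det Mmx * \det Rmx)%R.

End Network.

(* Main.v *)
Require Import Defs.
From HB Require Import structures.
From mathcomp Require Import all_boot all_order all_algebra.
From mathcomp Require Import zify.
Import Order.TTheory GRing.Theory Num.Theory.

Lemma pick_pos (n : nat) (f : 'I_n -> nat) : (0 < \sum_i f i)%N -> exists i, (0 < f i)%N.
Proof.
case: (pickP (fun i => 0 < f i)%N) => [i Hi|H]; first by exists i.
rewrite big1 // => i _; by move: (H i); rewrite lt0n => /negbFE/eqP.
Qed.

Lemma rest0 (n : nat) (f : 'I_n -> nat) i :
  \sum_(j | j != i) f j = 0%N -> forall j, j != i -> f j = 0%N.
Proof.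
move=> /eqP; rewrite sum_nat_eq0 => /forallP H j Hj.
by move: (H j); rewrite Hj => /eqP.
Qed.
Arguments rest0 {n f i}.

Lemma sum1 (n : nat) (f : 'I_n -> nat) : \sum_i f i = 1%N -> exists i, forall j, f j = (j == i) :> nat.
Proof.
move=> Hs; have [i Hi] : exists i, (0 < f i)%N by apply: pick_pos; rewrite Hs.
exists i; move: Hs; rewrite (bigD1 i) //= => Hs.
move: Hs; set r := (X in (_ + X)%N) => Hs; have Hr : r = 0%N by lia.
move=> j; case: (eqVneq j i) => [->|Hj]; first by move=> /=; lia.
by rewrite (rest0 Hr _ Hj).
Qed.

Lemma sum2 (n : nat) (f : 'I_n -> nat) : \sum_i f i = 2%N ->
  (exists i, forall j, f j = (j == i) * 2 :> nat) \/
  (exists A B, A != B /\ forall j, f j = ((j == A) + (j == B))%N).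
Proof.
move=> Hs; have [i Hi] : exists i, (0 < f i)%N by apply: pick_pos; rewrite Hs.
move: Hs; rewrite (bigD1 i) //=; set r := (X in (_ + X)%N) => Hs.
have [H2|H1] : f i = 2%N \/ f i = 1%N by lia.
  left; exists i => j; case: (eqVneq j i) => [->|Hj]; first by rewrite H2.
  have Hr : r = 0%N by lia.
  by rewrite (rest0 Hr _ Hj).
right.
set g := fun j => if j == i then 0%N else f j.
have Hg : \sum_j g j = 1%N.
  rewrite (bigD1 i) //= /g eqxx add0n.
  have -> : 1%N = r by lia.
  by apply: eq_bigr => j /negbTE ->.
have [B HB] := @sum1 _ _ Hg.
have HBi : B != i.
  apply/eqP => E; move: (HB B); rewrite /g E eqxx //.
exists i, B; split; first by rewrite eq_sym.
move=> j; case: (eqVneq j i) => [->|Hj]; first by rewrite H1 eq_sym (negbTE HBi).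
by move: (HB j); rewrite /g (negbTE Hj) => ->.
Qed.

Arguments sum1 {n f}.
Arguments sum2 {n f}.

Theorem mainTheorem9 (s : nat) (y yp : 'I_s -> 'I_s -> nat) :
  square_network y yp ->
  coupled y yp ->
  (2 <= s)%N ->
  (forall k : 'I_s, ~~ is_flow y yp k) ->
  (forall i : 'I_s, (TM y yp i <= 2)%N) ->
  Or y yp != 0%R ->
  forall k : 'I_s, exists A B : 'I_s, A != B /\
    ((forall j, y k j = ((j == A) + (j == B))%N /\ yp k j = 0%N) \/
     (forall j, y k j = (j == A) :> nat /\ yp k j = (j == B) :> nat)).
Proof.
move=> [Hne Hinv] Hcoup Hs2 Hflow HTM HOr k0.
have [HdM HdR] : (\det (Mmx y) != 0)%R /\ (\det (Rmx y yp) != 0)%R.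
  by move: HOr; rewrite /Or sgr_eq0 mulf_eq0 negb_or => /andP[].
have Hrow : forall k, exists i, (0 < y k i)%N.
  move=> k; case: (pickP (fun i => 0 < y k i)%N) => [i Hi|H]; first by exists i.
  exfalso; move/negP: HdM; apply; apply/eqP.
  rewrite (@determinant_multilinear _ _ (Mmx y) (Mmx y) (Mmx y) k 0 0)%R ?mul0r ?addr0 //.
  rewrite !scale0r addr0; apply/rowP => j; rewrite !mxE.
  by move: (H j); rewrite lt0n => /negbFE/eqP ->.
have Hrev : forall l k, ~~ is_rev_of y yp l k.
  move=> l k; apply/negP => /forallP H.
  case: (eqVneq l k) => [E|Hlk].
    subst l; have [j Hj] := Hne k; apply: Hj.
    by move: (H j) => /andP[/eqP].
  move/negP: HdR; apply; apply/eqP.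
  pose B := (\matrix_(a, j) (if a == l then Rmx y yp k j else Rmx y yp a j))%R.
  have HB : (\det B = 0)%R.
    apply: (@determinant_alternate _ _ B l k Hlk) => j.
    by rewrite !mxE eqxx eq_sym (negbTE Hlk).
  rewrite (@determinant_multilinear _ _ (Rmx y yp) B (Rmx y yp) l (-1) 0)%R.
  - by rewrite HB mulr0 mul0r addr0.
  - rewrite scale0r addr0 scaleN1r; apply/rowP => j; rewrite !mxE eqxx.
    move: (H j) => /andP[/eqP -> /eqP ->]; by rewrite opprB.
  - apply/matrixP => a j; rewrite !mxE.
    by rewrite eq_sym (negbTE (neq_lift _ _)).
  - by [].
have HTM' : forall i, (\sum_k (y k i + yp k i) <= 2)%N.
  move=> i; apply: leq_trans (HTM i); rewrite /TM.
  apply: eq_leq; symmetry; apply: eq_bigl => k.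
  rewrite (negbTE (Hflow k)) /= negb_exists; apply/forallP => l.
  by rewrite (negbTE (Hrev l k)) andbF.
pose a k := \sum_i y k i.
pose b k := \sum_i yp k i.
have Ha1 : forall k, 1 <= a k.
  move=> k; have [i Hi] := Hrow k; rewrite /a (bigD1 i) //=; lia.
have Hab2 : forall k, 2 <= a k + b k.
  move=> k; rewrite leqNgt; apply/negP => Hlt.
  have Ha : a k = 1 by move: (Ha1 k); lia.
  have Hb : b k = 0 by move: (Ha1 k); lia.
  have [i Hi] := sum1 Ha.
  move/negP: (Hflow k); apply; apply/orP; right; apply/andP; split.
    apply/forallP => j; move/eqP: Hb; rewrite /b sum_nat_eq0 => /forallP H.
    exact: (H j).
  by apply/existsP; exists i; apply/forallP => j; rewrite Hi.
have Htot : \sum_k (a k + b k) <= \sum_(k < s) 2.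
  have -> : \sum_k (a k + b k) = \sum_i \sum_k (y k i + yp k i).
    rewrite exchange_big; apply: eq_bigr => k _; by rewrite big_split.
  by apply: leq_sum => i _; exact: HTM'.
have Hab : forall k, a k + b k = 2.
  move=> k; apply/eqP; rewrite eqn_leq Hab2 andbT.
  move: Htot; rewrite (bigD1 k) //= [X in _ <= X](bigD1 k) //=.
  have : \sum_(l < s | l != k) 2 <= \sum_(l < s | l != k) (a l + b l).
    by apply: leq_sum => l _; exact: Hab2.
  move=> H1 H2; move: H1 H2; set u := \sum_(l < s | l != k) 2; set v := \sum_(l < s | l != k) (a l + b l); move=> H1 H2. lia.
have [[Ha2 Hb0]|[Ha Hb]] : (a k0 = 2 /\ b k0 = 0) \/ (a k0 = 1 /\ b k0 = 1).
    by move: (Hab k0) (Ha1 k0); lia.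
  have Hyp0 : forall j, yp k0 j = 0.
    move=> j; move/eqP: Hb0; rewrite /b sum_nat_eq0 => /forallP H.
    exact/eqP/(H j).
  have [[A HA]|[A [B [HAB HAB']]]] := sum2 Ha2; last first.
    by exists A, B; split => //; left => j; split.
  exfalso.
  have Hoth : forall l, l != k0 -> y l A + yp l A = 0.
    move=> l Hl; move: (HTM' A); rewrite (bigD1 k0) //= HA eqxx Hyp0.
    set r := (X in (_ + X <= _)) => H; have Hr : r = 0 by move: H => /=; lia.
    exact: (rest0 Hr _ Hl).
  have [l Hlk] : exists l : 'I_s, l != k0.
    have o0 : (0 < s)%N by lia.
    have o1 : (1 < s)%N by lia.
    case: (eqVneq k0 (Ordinal o0)) => [E|E].
      by exists (Ordinal o1); rewrite E; apply/eqP => /(congr1 val).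
    by exists (Ordinal o0); rewrite eq_sym.
  have [k' [l' [i [Hk' Hl' Hik Hil]]]] := Hcoup [set k0]
     ltac:(apply/set0Pn; exists k0; exact: set11)
     ltac:(apply/negP => /eqP E; move: (in_setT l); rewrite -E inE; apply/negP; exact: Hlk).
  move: Hk'; rewrite inE => /eqP Ek; subst k'.
  move: Hl'; rewrite inE => Hl'.
  have EiA : i = A.
    move: Hik; rewrite /involved Hyp0 orbF HA.
    by case: (eqVneq i A).
  subst i.
  move: (Hoth l' Hl') Hil; rewrite /involved; lia.
have [A HA] := sum1 Ha.
have [B HB] := sum1 Hb.
exists A, B; split; last by right => j; rewrite HA HB.
apply/eqP => E; subst B; have [j Hj] := Hne k0; apply: Hj; by rewrite HA HB.
Qed.
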